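(* Let $N,w,h$ be positive integers with $N/h\leq w\leq N-h+1$, and let $$f_N(w,h)=\max\Big\{\sum_{l=1}^{|\Lambda|}N_l^2\ :\ \Lambda \text{ a partition of }\{1,\dots,N\}\text{ with }\max\Lambda\leq w,\ |\Lambda|\geq h\Big\}.$$ Then $f_N(w,h)\leq w(N-h)+N$.
   Context: A partition $\Lambda=\{A_1,\dots,A_{|\Lambda|}\}$ of $\{1,\dots,N\}$ is a collection of nonempty pairwise disjoint subsets whose union is $\{1,\dots,N\}$; $|\Lambda|$ is the number of subsets, $N_l=|A_l|$, and $\max\Lambda=\max_lN_l$. *)

(* Defs.v *)
From mathcomp Require Import all_boot.
Set Implicit Arguments. Unset Strict Implicit. Unset Printing Implicit Defensive.

(* A partition of {1..N} is modelled as a partition of the finite type 'I_N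
   (mathcomp's [partition P D]: blocks nonempty, pairwise disjoint, covering D). *)
Definition is_partition (N : nat) (P : {set {set 'I_N}}) : bool :=
  partition P [set: 'I_N].

Definition maxblock (N : nat) (P : {set {set 'I_N}}) : nat :=
  \max_(A in P) #|A|.

Definition sqsum (N : nat) (P : {set {set 'I_N}}) : nat :=
  \sum_(A in P) #|A| ^ 2.

(* f_N(w,h): max over partitions with max block <= w and at least h blocks
   (0 if there is no such partition). *)
Definition fN (N w h : nat) : nat :=
  \max_(P : {set {set 'I_N}} | is_partition P && (maxblock P <= w) && (h <= #|P|))
     sqsum P.

(* Main.v *)
Require Import Defs.
From mathcomp Require Import all_boot.
From mathcomp Require Import zify.

Theorem lemma2 (N w h : nat) :
  0 < N -> 0 < w -> 0 < h ->
  N <= w * h -> w <= N - h + 1 ->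
  fN N w h <= w * (N - h) + N.
Proof.
move=> _ _ _ _ _.
apply/bigmax_leqP => P /andP [/andP [HP Hmax] Hh].
have Hb : forall A, A \in P -> #|A| <= w.
  by move=> A AP; apply: leq_trans Hmax; rewrite /maxblock (bigmax_sup A).
have Hne : forall A, A \in P -> 0 < #|A|.
  move=> A AP; rewrite card_gt0; apply/negP => /eqP E.
  by move: HP; rewrite /is_partition /partition => /and3P [_ _]; rewrite -E AP.
have HN : N = \sum_(A in P) #|A|.
  by rewrite -(card_partition HP) cardsT card_ord.
have H1 : sqsum P <= \sum_(A in P) (w * (#|A|).-1 + #|A|).
  apply: leq_sum => A AP; have := Hb A AP; have := Hne A AP; nia.
have H2 : \sum_(A in P) (#|A|).-1 + #|P| = N.
  rewrite [RHS]HN -sum1_card -big_split /=; apply: eq_bigr => A AP.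
  by rewrite addn1 prednK // Hne.
apply: (leq_trans H1); rewrite big_split /= -big_distrr /=.
move: H2 Hh HN; set S1 := \sum_(A in P) (#|A|).-1; set S2 := \sum_(A in P) #|A|.
move=> H2 Hh HN; rewrite -HN leq_add2r; apply: leq_mul => //; lia.
Qed.
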